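(* Let $k=\mathbb{F}_3$, let $O_7(k)$ be the group of $7\times7$ matrices over $k$ orthogonal for the bilinear form $\langle x,y\rangle=x_1y_7+x_2y_6+\dots+x_7y_1$ on $k^7$, and let \[ A=\begin{pmatrix} 0&0&1&0&0&1&0\\ 1&0&0&0&0&0&1\\ 0&1&0&0&0&0&0\\ 0&0&0&0&0&0&0\\ 0&1&0&0&0&0&1\\ 0&0&1&0&1&0&0\\ 0&0&0&0&0&1&0 \end{pmatrix}. \] Then there exists $g\in O_7(k)$ such that $M=g^{-1}Ag$ satisfies $M_{ij}=0$ for all $(i,j)\in\{(3,1),(4,1),(5,1),(6,1),(6,2),(7,1),(7,2),(7,3),(7,4),(7,5)\}$. Even more, there exists $g\in O_7(k)$ such that $M=g^{-1}Ag$ satisfies: $M_{ij}=0$ for all $(i,j)\in\{(3,1),(4,1),(4,2),(5,1),(6,1),(6,2),(6,4),(7,1),(7,2),(7,3),(7,4),(7,5)\}$, and $M_{21},M_{32},M_{52},M_{63},M_{65},M_{76}\in k^\times$ (all remaining entries arbitrary).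
   Context: $M_{ij}$ denotes the entry in row $i$ and column $j$. *)

(* Defs.v *)
From HB Require Import structures.
From mathcomp Require Import all_boot all_order all_algebra.
Set Implicit Arguments. Unset Strict Implicit. Unset Printing Implicit Defensive.
Import GRing.Theory.
Local Open Scope ring_scope.

Notation F3 := ('F_3 : finFieldType).

(* Gram matrix of <x,y> = x1 y7 + x2 y6 + ... + x7 y1 : antidiagonal identity *)
Definition Jform : 'M[F3]_7 :=
  \matrix_(i < 7, j < 7) (if (i + j == 6)%N then 1 else 0).

Definition orthogonal7 (g : 'M[F3]_7) : Prop := g^T *m Jform *m g = Jform.

(* 1-based entry M_{ij} (rows/cols numbered 1..7) *)
Definition entry (M : 'M[F3]_7) (i j : nat) : F3 := M (inord i.-1) (inord j.-1).

Definition A_rows : seq (seq nat) :=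
  [:: [:: 0; 0; 1; 0; 0; 1; 0];
      [:: 1; 0; 0; 0; 0; 0; 1];
      [:: 0; 1; 0; 0; 0; 0; 0];
      [:: 0; 0; 0; 0; 0; 0; 0];
      [:: 0; 1; 0; 0; 0; 0; 1];
      [:: 0; 0; 1; 0; 1; 0; 0];
      [:: 0; 0; 0; 0; 0; 1; 0]]%N.

Definition Amat : 'M[F3]_7 :=
  \matrix_(i < 7, j < 7) (nth 0%N (nth [::] A_rows i) j)%:R.

Definition zeros1 : seq (nat * nat) :=
  [:: (3,1); (4,1); (5,1); (6,1); (6,2); (7,1); (7,2); (7,3); (7,4); (7,5)]%N.
Definition zeros2 : seq (nat * nat) :=
  [:: (3,1); (4,1); (4,2); (5,1); (6,1); (6,2); (6,4); (7,1); (7,2); (7,3); (7,4); (7,5)]%N.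
Definition units2 : seq (nat * nat) :=
  [:: (2,1); (3,2); (5,2); (6,3); (6,5); (7,6)]%N.

(* Main.v *)
Require Import Defs.
From HB Require Import structures.
From mathcomp Require Import all_boot all_order all_algebra.
Import GRing.Theory.
Local Open Scope ring_scope.

Definition mk (s : seq (seq nat)) : 'M[F3]_7 :=
  \matrix_(i < 7, j < 7) (nth 0%N (nth [::] s i) j)%:R.

Definition gmat := mk [:: [:: 1; 1; 2; 0; 1; 0; 1];
 [:: 0; 1; 2; 1; 1; 2; 0];
 [:: 0; 0; 0; 0; 2; 2; 0];
 [:: 0; 0; 0; 1; 0; 2; 1];
 [:: 0; 0; 2; 0; 0; 1; 0];
 [:: 0; 0; 0; 0; 0; 1; 2];
 [:: 0; 0; 0; 0; 0; 0; 1]]%N.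

Definition hmat := mk [:: [:: 1; 2; 0; 1; 0; 0; 1];
 [:: 0; 1; 1; 2; 2; 2; 0];
 [:: 0; 0; 0; 0; 2; 1; 1];
 [:: 0; 0; 0; 1; 0; 1; 0];
 [:: 0; 0; 2; 0; 0; 2; 2];
 [:: 0; 0; 0; 0; 0; 1; 1];
 [:: 0; 0; 0; 0; 0; 0; 1]]%N.

Definition Mmat := mk [:: [:: 2; 2; 1; 0; 1; 1; 2];
 [:: 1; 1; 0; 0; 2; 0; 1];
 [:: 0; 2; 0; 2; 1; 2; 1];
 [:: 0; 0; 2; 0; 2; 0; 0];
 [:: 0; 2; 2; 2; 0; 0; 1];
 [:: 0; 0; 2; 0; 2; 1; 2];
 [:: 0; 0; 0; 0; 0; 1; 2]]%N.

Ltac mxcomp :=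
  apply/matrixP; intros ii jj;
  rewrite ?(mxE, big_ord_recr, big_ord0);
  destruct ii as [[|[|[|[|[|[|[|ii]]]]]]] Hi]; try discriminate Hi;
  destruct jj as [[|[|[|[|[|[|[|jj]]]]]]] Hj]; try discriminate Hj;
  apply/eqP; vm_compute; reflexivity.

Definition Pmat := mk [:: [:: 0; 0; 0; 0; 0; 0; 1];
 [:: 0; 0; 0; 0; 0; 1; 1];
 [:: 0; 0; 2; 0; 0; 2; 2];
 [:: 0; 0; 0; 1; 0; 1; 0];
 [:: 0; 0; 0; 0; 2; 1; 1];
 [:: 0; 1; 1; 2; 2; 2; 0];
 [:: 1; 2; 0; 1; 0; 0; 1]]%N.

Lemma orthP : gmat^T *m Jform = Pmat.
Proof. rewrite /Pmat /gmat /mk /Jform. Time mxcomp. Qed.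

Lemma orth : orthogonal7 gmat.
Proof. rewrite /orthogonal7 orthP /Pmat /gmat /mk /Jform. Time mxcomp. Qed.

Lemma hg : hmat *m gmat = 1%:M.
Proof. rewrite /hmat /gmat /mk. mxcomp. Qed.

Definition Qmat := mk ([:: [:: 2; 0; 1; 0; 0; 2; 2];
 [:: 1; 0; 2; 0; 2; 0; 0];
 [:: 0; 2; 1; 0; 1; 1; 2];
 [:: 0; 0; 1; 0; 1; 0; 0];
 [:: 0; 2; 2; 0; 2; 2; 0];
 [:: 0; 0; 1; 0; 1; 1; 0];
 [:: 0; 0; 0; 0; 0; 1; 0]]%N).

Lemma hA : hmat *m Amat = Qmat.
Proof. rewrite /hmat /Qmat /Amat /mk. mxcomp. Qed.

Lemma hAg : hmat *m Amat *m gmat = Mmat.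
Proof. rewrite hA /Qmat /gmat /Mmat /mk. mxcomp. Qed.

Lemma Meq : invmx gmat *m Amat *m gmat = Mmat.
Proof.
have [_ gu] := mulmx1_unit hg.
have gh := mulmx1C hg.
have -> : invmx gmat = hmat.
  by rewrite -[invmx gmat]mulmx1 -gh mulmxA mulVmx // mul1mx.
exact: hAg.
Qed.

Lemma Z1 : all (fun ij => entry Mmat ij.1 ij.2 == 0) zeros1.
Proof. rewrite /= /entry /Mmat /mk !mxE !inordK //. Qed.
Lemma Z2 : all (fun ij => entry Mmat ij.1 ij.2 == 0) zeros2.
Proof. rewrite /= /entry /Mmat /mk !mxE !inordK //. Qed.
Lemma U2 : all (fun ij => entry Mmat ij.1 ij.2 != 0) units2.
Proof. rewrite /= /entry /Mmat /mk !mxE !inordK //. Qed.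

Theorem lemma2p3 :
  (exists g : 'M[F3]_7, orthogonal7 g /\
     let M := invmx g *m Amat *m g in
     forall ij, ij \in zeros1 -> entry M ij.1 ij.2 = 0)
  /\
  (exists g : 'M[F3]_7, orthogonal7 g /\
     let M := invmx g *m Amat *m g in
     (forall ij, ij \in zeros2 -> entry M ij.1 ij.2 = 0) /\
     (forall ij, ij \in units2 -> entry M ij.1 ij.2 != 0)).
Proof.
split; exists gmat; split; try exact: orth; move=> M; have -> : M = Mmat by exact: Meq.
- by move=> ij H; apply/eqP; exact: (allP Z1 ij H).
- split=> ij H; first by apply/eqP; exact: (allP Z2 ij H).
  exact: (allP U2 ij H).
Qed.
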